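(* Let $f:\mathbb{R}^n\to\mathbb{R}$ be a continuously differentiable convex function, let $h:\mathbb{R}^n\to\mathbb{R}$ be a continuously differentiable strictly convex function, and assume $f$ is $L_h$-smooth relative to $h$ for some $L_h>0$, i.e. $L_h h - f$ is convex. Let $s$ be a positive integer, let $C_s=\{x\in\mathbb{R}^n: \|x\|_0\le s\}$, and let $x^*$ be an optimal solution of $\min\{f(x): x\in C_s\}$. Let $L>L_h$. Then $$x^*\in \operatorname*{argmin}_{y\in C_s}\ \nabla f(x^* )^T(y-x^* )+L\,D_h(y,x^* ).$$
   Context: $\|x\|_0$ denotes the number of nonzero entries of $x$. The Bregman distance generated by $h$ is $D_h(y,x)=h(y)-h(x)-\nabla h(x)^T(y-x)$. *)

(* Defs.v *)
From HB Require Import structures.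
From mathcomp Require Import all_boot all_order all_algebra.
From mathcomp Require Import all_classical all_reals all_analysis.
Set Implicit Arguments. Unset Strict Implicit. Unset Printing Implicit Defensive.
Import Order.TTheory GRing.Theory Num.Theory.
Import numFieldNormedType.Exports.
Local Open Scope classical_set_scope.
Local Open Scope ring_scope.

Section Defs.
Variables (R : realType) (n : nat).

Definition dotp (u v : 'rV[R]_n) : R := \sum_(i < n) u ord0 i * v ord0 i.

Definition grad (f : 'rV[R]_n -> R) (x : 'rV[R]_n) : 'rV[R]_n :=
  \row_(i < n) 'D_(delta_mx ord0 i) f x.

Definition C1 (f : 'rV[R]_n -> R) : Prop :=
  (forall x, differentiable f x) /\ continuous (grad f).

Definition convex_fun (f : 'rV[R]_n -> R) : Prop :=
  forall (x y : 'rV[R]_n) (t : R), 0 <= t <= 1 ->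
    f (t *: x + (1 - t) *: y) <= t * f x + (1 - t) * f y.

Definition strictly_convex_fun (f : 'rV[R]_n -> R) : Prop :=
  forall (x y : 'rV[R]_n) (t : R), x != y -> 0 < t < 1 ->
    f (t *: x + (1 - t) *: y) < t * f x + (1 - t) * f y.

Definition norm0 (x : 'rV[R]_n) : nat := #|[set i : 'I_n | x ord0 i != 0]|.

Definition sparse_set (s : nat) : set 'rV[R]_n := [set x | (norm0 x <= s)%N].

Definition bregman (h : 'rV[R]_n -> R) (y x : 'rV[R]_n) : R :=
  h y - h x - dotp (grad h x) (y - x).

Definition is_argmin (A : set 'rV[R]_n) (g : 'rV[R]_n -> R) (x : 'rV[R]_n) : Prop :=
  A x /\ forall y, A y -> g x <= g y.

End Defs.

(* Main.v *)
Require Import Defs.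
From HB Require Import structures.
From mathcomp Require Import all_boot all_order all_algebra.
From mathcomp Require Import all_classical all_reals all_analysis.
From mathcomp Require Import ring lra.
Import Order.TTheory GRing.Theory Num.Theory.
Import numFieldNormedType.Exports.
Local Open Scope classical_set_scope.
Local Open Scope ring_scope.

Lemma convex_deriv_le (R : realType) (n : nat) (g : 'rV[R]_n -> R) x v :
  (forall t, 0 < t < 1 -> g (t *: (x + v) + (1 - t) *: x) <= t * g (x + v) + (1 - t) * g x) ->
  derivable g x v -> 'D_v g x <= g (x + v) - g x.
Proof.
move=> cg dg.
set q := (fun t : R => t^-1 *: ((g \o shift x) (t *: v) - g x)).
have cq : q @ 0^' --> 'D_v g x by exact: dg.
have cqr : q @ 0^'+ --> 'D_v g x.
  move=> A /cq /nbhs_ballP [e e0 H]; exists e => //= y xe_y.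
  by rewrite lt_def => /andP [yne _]; apply: H.
apply: (cvgr_to_le cqr).
near=> t.
have t0 : 0 < t by near: t; exact: nbhs_right_gt.
have t1 : t < 1 by near: t; exact: nbhs_right_lt.
rewrite /q /= -[t^-1 *: _]/(t^-1 * _) ler_pdivrMl // .
have := cg t.
rewrite t0 t1 => /(_ isT).
have -> : t *: (x + v) + (1 - t) *: x = t *: v + x.
  rewrite scalerDr scalerBl scale1r.
  by rewrite [t *: x + _]addrC -addrA [t *: x + _]addrC subrK.
move=> H; lra.
Unshelve. all: by end_near.
Qed.

Lemma dir_grad (R : realType) (n : nat) (g : 'rV[R]_n -> R) x v :
  differentiable g x -> 'D_v g x = dotp (grad g x) v.
Proof.
move=> dg; rewrite deriveE //.
rewrite [in LHS](row_sum_delta v) linear_sum /dotp.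
apply: eq_bigr => i _.
rewrite linearZ /= mxE -deriveE //.
by rewrite mulrC.
Qed.

Theorem lemma3p2 (R : realType) (n : nat) (f h : 'rV[R]_n -> R) (Lh L : R)
  (s : nat) (xstar : 'rV[R]_n) :
  C1 f -> convex_fun f ->
  C1 h -> strictly_convex_fun h ->
  0 < Lh -> convex_fun (fun x => Lh * h x - f x) ->
  (0 < s)%N ->
  is_argmin (@sparse_set R n s) f xstar ->
  Lh < L ->
  is_argmin (@sparse_set R n s)
    (fun y => dotp (grad f xstar) (y - xstar) + L * bregman h y xstar) xstar.
Proof.
move=> [df _] _ [dh _] sch Lh0 cphi _ [Cx xmin] LhL.
split => // y Cy.
have dot0 : forall u : 'rV[R]_n, dotp u 0 = 0.
  by move=> u; rewrite /dotp big1 // => i _; rewrite mxE mulr0.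
have dot0' : forall u w : 'rV[R]_n, dotp u (w - w) = 0 by move=> u w; rewrite subrr dot0.
rewrite /bregman !dot0' !subrr mulr0 addr0.
have [->|yx] := eqVneq y xstar.
  by rewrite !dot0' !subrr mulr0 addr0.
set v := y - xstar.
have xv : xstar + v = y by rewrite /v addrC subrK.
have B : 'D_v h xstar <= h y - h xstar.
  rewrite -xv; apply: convex_deriv_le; last exact: diff_derivable.
  by move=> t t01; apply/ltW/sch => //; rewrite xv.
have phiE : (Lh \*: h) - f = (fun x => Lh * h x - f x) by [].
have A : 'D_v ((Lh \*: h) - f) xstar <= (Lh * h y - f y) - (Lh * h xstar - f xstar).
  rewrite phiE -xv; apply: convex_deriv_le; last first.
    by rewrite -phiE; apply: derivableB; [apply: derivableZ|]; apply: diff_derivable.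
  by move=> t /andP[t0 t1]; apply: cphi; rewrite !ltW.
rewrite deriveB in A; last 2 first.
- by apply: derivableZ; apply: diff_derivable.
- exact: diff_derivable.
rewrite deriveZ in A; last exact: diff_derivable.
rewrite !dir_grad // in A B.
have fxy := xmin y Cy.
have B' : 0 <= h y - h xstar - dotp (grad h xstar) v by lra.
have LL : 0 <= L - Lh by rewrite subr_ge0 ltW.
have := mulr_ge0 LL B'.
rewrite -[Lh *: _]/(Lh * _) in A.
nra.
Qed.
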